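(* It holds that \[ \mathscr{A}(\mathbb{R}^3\otimes\mathbb{R}^3\otimes\mathbb{R}^3)=\mathscr{A}(\mathrm{Sym}^3(\mathbb{R}^3))=\frac{1}{\sqrt{\max_{A\in\mathbb{R}^3\otimes\mathbb{R}^3\otimes\mathbb{R}^3}\operatorname{rk}_\perp(A)}}=\frac{1}{\sqrt7}. \] Moreover, the symmetric tensor associated with the Chebyshev cubic $\mathrm{Ch}_{3,3}(x)=x_1^3-3x_1(x_2^2+x_3^2)$ is extremal, both in $\mathbb{R}^3\otimes\mathbb{R}^3\otimes\mathbb{R}^3$ and in $\mathrm{Sym}^3(\mathbb{R}^3)$.
   Context: Tensors and their norms: \begin{itemize} \item The Frobenius inner product on real $(n_1,\dots,n_d)$-tensors is $\langle A,A'\rangle_F=\sum a_{i_1\dots i_d}a'_{i_1\dots i_d}$, with norm $\|A\|_F$. \item A rank-one tensor is a nonzero $x^{(1)}\otimes\cdots\otimes x^{(d)}$. \item The spectral norm is $\|A\|_2=\max_{\|x^{(j)}\|=1}\langle A,x^{(1)}\otimes\cdots\otimes x^{(d)}\rangle_F$. \end{itemize} Best rank-one approximation ratio: \begin{itemize} \item For a linear subspace $V$ of the tensor space (either the full tensor space or the space $\mathrm{Sym}^d(\mathbb{R}^n)$ of symmetric $n^d$-tensors), $\mathscr{A}(V)=\min_{0\neq A\in V}\|A\|_2/\|A\|_F$. \item A nonzero $A\in V$ is called extremal (in $V$) if $\|A\|_2/\|A\|_F=\mathscr{A}(V)$. \end{itemize} Orthogonal rank: $\operatorname{rk}_\perp(A)$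 is the smallest $r$ with $A=Y_1+\dots+Y_r$, where the $Y_\ell$ are rank-one tensors that are pairwise orthogonal in $\langle\cdot,\cdot\rangle_F$. The symmetric tensor $A$ associated with a form $p\in P_{d,n}$ is the unique symmetric tensor with $p(x)=\langle A,x\otimes\cdots\otimes x\rangle_F$. *)

(* Defs.v *)
From Stdlib Require Import Reals List ClassicalEpsilon.
Open Scope R_scope.

(* Index set {1,2,3} of R^3 (I0,I1,I2 correspond to coordinates 1,2,3). *)
Inductive idx3 : Type := I0 | I1 | I2.

Definition sum3 (f : idx3 -> R) : R := f I0 + f I1 + f I2.

Definition vec3 := idx3 -> R.
Definition tensor := idx3 -> idx3 -> idx3 -> R.

Definition tzero : tensor := fun _ _ _ => 0.
Definition tadd (A B : tensor) : tensor := fun i j k => A i j k + B i j k.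

Definition vnorm (x : vec3) : R := sqrt (sum3 (fun i => x i * x i)).

Definition frob_inner (A B : tensor) : R :=
  sum3 (fun i => sum3 (fun j => sum3 (fun k => A i j k * B i j k))).
Definition frob_norm (A : tensor) : R := sqrt (frob_inner A A).

Definition outer (x y z : vec3) : tensor := fun i j k => x i * y j * z k.

Definition rank_one (T : tensor) : Prop :=
  T <> tzero /\ exists x y z : vec3, T = outer x y z.

Definition is_glb (E : R -> Prop) (m : R) : Prop :=
  (forall y, E y -> m <= y) /\ (forall b, (forall y, E y -> b <= y) -> b <= m).

(* Spectral norm: max over unit x,y,z of <A, x (x) y (x) z>_F
   (defined as the supremum, which is attained). *)
Definition spec_values (A : tensor) : R -> Prop :=
  fun v => exists x y z : vec3,
    vnorm x = 1 /\ vnorm y = 1 /\ vnorm z = 1 /\ v = frob_inner A (outer x y z).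
Definition spec_norm (A : tensor) : R :=
  epsilon (inhabits 0) (fun s => is_lub (spec_values A) s).

Definition full_space : tensor -> Prop := fun _ => True.
Definition symmetric (A : tensor) : Prop :=
  forall i j k, A i j k = A j i k /\ A i j k = A i k j /\ A i j k = A k j i.
Definition sym_space : tensor -> Prop := symmetric.

(* Best rank-one approximation ratio A(V) = min_{0<>A in V} ||A||_2/||A||_F
   (defined as the infimum; extremality below asserts it is attained). *)
Definition ratio_values (V : tensor -> Prop) : R -> Prop :=
  fun r => exists A, V A /\ A <> tzero /\ r = spec_norm A / frob_norm A.
Definition brao (V : tensor -> Prop) : R :=
  epsilon (inhabits 0) (fun m => is_glb (ratio_values V) m).

Definition extremal (V : tensor -> Prop) (A : tensor) : Prop :=
  V A /\ A <> tzero /\ spec_norm A / frob_norm A = brao V.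

Definition orth_decomp (A : tensor) (r : nat) : Prop :=
  exists Ys : list tensor,
    length Ys = r /\
    Forall rank_one Ys /\
    (forall a b, (a < r)%nat -> (b < r)%nat -> a <> b ->
       frob_inner (nth a Ys tzero) (nth b Ys tzero) = 0) /\
    A = fold_right tadd tzero Ys.

Definition rk_perp (A : tensor) : nat :=
  epsilon (inhabits 0%nat)
    (fun r => orth_decomp A r /\ forall r', orth_decomp A r' -> (r <= r')%nat).

Definition max_rk_perp : nat :=
  epsilon (inhabits 0%nat)
    (fun m => (exists A, rk_perp A = m) /\ forall A, (rk_perp A <= m)%nat).

Definition cheb33 (x : vec3) : R :=
  x I0 ^ 3 - 3 * x I0 * (x I1 ^ 2 + x I2 ^ 2).

Definition assoc_sym_tensor (p : vec3 -> R) (A : tensor) : Prop :=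
  symmetric A /\ forall x : vec3, p x = frob_inner A (outer x x x).

(* Main.v *)
Require Import Defs.
From Stdlib Require Import Reals Lra Psatz List ClassicalEpsilon Classical FunctionalExtensionality Arith Lia.
Import ListNotations.
Open Scope R_scope.

Definition dot (x y : vec3) : R := sum3 (fun i => x i * y i).
Definition cross (a b : vec3) : vec3 := fun i => match i with
 | I0 => a I1 * b I2 - a I2 * b I1
 | I1 => a I2 * b I0 - a I0 * b I2
 | I2 => a I0 * b I1 - a I1 * b I0 end.
Definition nz (v:vec3) := 0 < dot v v.
Definition vlin s (p:vec3) t (q:vec3) : vec3 := fun i => s * p i + t * q i.
Definition vsc (c:R) (v:vec3) : vec3 := fun i => c * v i.
Definition mk3 a b c : vec3 := fun i => match i with I0 => a | I1 => b | I2 => c end.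
Definition mat := idx3 -> idx3 -> R.
Definition col (M : mat) k : vec3 := fun j => M j k.
Definition det3 (M : mat) := dot (col M I0) (cross (col M I1) (col M I2)).
Definition slice (A:tensor) (u:vec3) : mat := fun j k => sum3 (fun i => u i * A i j k).

Ltac ud := unfold det3, slice, col, dot, sum3, cross, vlin, vsc, mk3.

Lemma dot_ge0 x : 0 <= dot x x.
Proof. ud; nra. Qed.
Lemma dot_zero x : dot x x = 0 -> forall i, x i = 0.
Proof. ud; intros H i; destruct i; nra. Qed.
Lemma dot_sym x y : dot x y = dot y x.
Proof. ud; ring. Qed.
Lemma not_nz x : ~ nz x -> dot x x = 0.
Proof. unfold nz; intros; pose proof (dot_ge0 x); lra. Qed.
Lemma zero_dot x w : ~ nz x -> dot x w = 0.
Proof. intros H; apply not_nz in H; pose proof (dot_zero _ H) as Z.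
  ud; rewrite !Z; ring. Qed.

Lemma cubic_root a b c d : exists s t, (s <> 0 \/ t <> 0) /\
  a*s^3 + b*s^2*t + c*s*t^2 + d*t^3 = 0.
Proof.
  destruct (Req_dec a 0) as [Ha|Ha].
  - exists 1, 0; split; [left; lra| subst; ring].
  - set (B := b/a); set (C := c/a); set (D := d/a).
    set (M := 1 + Rabs B + Rabs C + Rabs D).
    assert (hB1 := Rle_abs B); assert (hB2 := Rle_abs (-B)); rewrite Rabs_Ropp in hB2.
    assert (hC1 := Rle_abs C); assert (hC2 := Rle_abs (-C)); rewrite Rabs_Ropp in hC2.
    assert (hD1 := Rle_abs D); assert (hD2 := Rle_abs (-D)); rewrite Rabs_Ropp in hD2.
    assert (hM : 1 <= M) by (unfold M; pose proof (Rabs_pos B); pose proof (Rabs_pos C); pose proof (Rabs_pos D); lra).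
    set (bB := Rabs B) in *; set (bC := Rabs C) in *; set (bD := Rabs D) in *.
    assert (hMd : M = 1 + bB + bC + bD) by reflexivity.
    set (f := fun s => s^3 + B*s^2 + C*s + D).
    assert (Hc : continuity f) by (unfold f; reg).
    assert (f1 : 0 < f M).
    { unfold f. assert (0 <= M*M) by nra. assert (M <= M*M) by nra.
      assert (B*(M*M) >= -bB*(M*M)) by nra.
      assert (C*M >= -bC*(M*M)) by nra.
      assert (D >= -bD*(M*M)) by nra. nra. }
    assert (f2 : f (-M) < 0).
    { unfold f. assert (0 <= M*M) by nra. assert (M <= M*M) by nra.
      assert (B*(M*M) <= bB*(M*M)) by nra.
      assert (-C*M <= bC*(M*M)) by nra.
      assert (D <= bD*(M*M)) by nra. nra. }
    destruct (IVT f (-M) M Hc ltac:(lra) f2 f1) as [z [_ Hz]].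
    exists z, 1; split; [right; lra|].
    unfold f, B, C, D in Hz.
    replace (a * z ^ 3 + b * z ^ 2 * 1 + c * z * 1 ^ 2 + d * 1 ^ 3) with
      (a * (z ^ 3 + b / a * z ^ 2 + c / a * z + d / a)) by (field; auto).
    rewrite Hz; ring.
Qed.

Lemma root2 (P Q : mat) : exists s t, (s <> 0 \/ t <> 0) /\
  det3 (fun j k => s * P j k + t * Q j k) = 0.
Proof.
  set (a := det3 P); set (d := det3 Q).
  set (e1 := det3 (fun j k => P j k + Q j k)); set (e2 := det3 (fun j k => P j k - Q j k)).
  destruct (cubic_root a ((e1-e2)/2 - d) ((e1+e2)/2 - a) d) as [s [t [H1 H2]]].
  exists s, t; split; auto. rewrite <- H2. unfold a, d, e1, e2. ud. cbv beta. field.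
Qed.

Lemma complete2 v : nz v -> exists w1 w2, nz w1 /\ nz w2 /\ dot v w1 = 0 /\ dot v w2 = 0 /\ dot w1 w2 = 0.
Proof.
  intros Hv. destruct (classic (v I0 = 0 /\ v I1 = 0)) as [[h0 h1]|h].
  - exists (mk3 1 0 0), (mk3 0 1 0). unfold nz; ud; rewrite h0, h1; repeat split; lra.
  - assert (0 < v I0 * v I0 + v I1 * v I1).
    { destruct (Req_dec (v I0) 0); [assert (v I1 <> 0) by tauto|]; nra. }
    exists (mk3 (- v I1) (v I0) 0), (mk3 (- v I0 * v I2) (- v I1 * v I2) (v I0 * v I0 + v I1 * v I1)).
    unfold nz; ud; repeat split; nra.
Qed.

Lemma par_case a b c : nz a -> ~ nz (cross a b) -> ~ nz (cross a c) ->
  exists v, nz v /\ dot v a = 0 /\ dot v b = 0 /\ dot v c = 0.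
Proof.
  intros Ha Hb Hc. destruct (complete2 a Ha) as [v [w2 [Hv [_ [Hav _]]]]].
  exists v.
  assert (E : forall w, dot (cross a w) (cross a v) = dot a a * dot w v - dot a v * dot w a) by (intros; ud; ring).
  pose proof (E b) as Eb; pose proof (E c) as Ec.
  rewrite zero_dot in Eb by auto; rewrite zero_dot in Ec by auto.
  rewrite Hav in Eb, Ec. unfold nz in Ha.
  split; [auto|split;[rewrite dot_sym; auto|split]]; rewrite dot_sym.
  - apply (Rmult_eq_reg_l (dot a a)); lra.
  - apply (Rmult_eq_reg_l (dot a a)); lra.
Qed.

Lemma nz_cross_sym a b : ~ nz (cross a b) -> ~ nz (cross b a).
Proof. unfold nz; intros H; contradict H.
  replace (dot (cross a b) (cross a b)) with (dot (cross b a) (cross b a)) by (ud; ring); auto. Qed.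

Lemma null3 c0 c1 c2 : dot c0 (cross c1 c2) = 0 ->
  exists v, nz v /\ dot v c0 = 0 /\ dot v c1 = 0 /\ dot v c2 = 0.
Proof.
  intros D.
  destruct (classic (nz (cross c1 c2))) as [H|H12].
  { exists (cross c1 c2); split; auto. rewrite dot_sym; split; auto; split; ud; ring. }
  destruct (classic (nz (cross c2 c0))) as [H|H20].
  { exists (cross c2 c0); split; auto. split; [ud;ring|split; [|ud;ring]].
    rewrite <- D; ud; ring. }
  destruct (classic (nz (cross c0 c1))) as [H|H01].
  { exists (cross c0 c1); split; auto. split; [ud;ring|split; [ud;ring|]].
    rewrite <- D; ud; ring. }
  destruct (classic (nz c0)) as [h0|h0].
  { apply par_case; auto; apply nz_cross_sym; auto. }
  destruct (classic (nz c1)) as [h1|h1].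
  { destruct (par_case c1 c2 c0 h1 H12 (nz_cross_sym _ _ H01)) as [v [? [? [? ?]]]].
    exists v; tauto. }
  destruct (classic (nz c2)) as [h2|h2].
  { destruct (par_case c2 c0 c1 h2 H20 (nz_cross_sym _ _ H12)) as [v [? [? [? ?]]]].
    exists v; tauto. }
  exists (mk3 1 0 0). split. { unfold nz; ud; lra. }
  rewrite (dot_sym _ c0), (dot_sym _ c1), (dot_sym _ c2), !zero_dot; auto.
Qed.

Lemma orth_zero a b c y : nz a -> nz b -> nz c -> dot a b = 0 -> dot a c = 0 -> dot b c = 0 ->
  dot y a = 0 -> dot y b = 0 -> dot y c = 0 -> forall i, y i = 0.
Proof.
  intros Ha Hb Hc ab ac bc ya yb yc.
  set (n := cross a b).
  assert (I1 : forall w i, w i * dot n n = n i * dot n w + dot w b * (cross n a) i - dot w a * (cross n b) i)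
    by (intros w i; unfold n; destruct i; ud; ring).
  assert (HN : dot n n = dot a a * dot b b - dot a b * dot a b) by (unfold n; ud; ring).
  rewrite ab in HN. unfold nz in *.
  assert (Np : 0 < dot n n) by (rewrite HN; nra).
  set (N := dot n n) in *.
  assert (Hy : forall i, y i * N = n i * dot n y) by (intros i; rewrite I1, ya, yb; ring).
  assert (Hcc : forall i, c i * N = n i * dot n c) by (intros i; rewrite I1, (dot_sym c b), (dot_sym c a), ac, bc; ring).
  assert (E1 : dot c c * (N*N) = dot n c * dot n c * N).
  { transitivity (sum3 (fun i => (c i * N) * (c i * N))); [ud; ring|].
    unfold sum3; rewrite !Hcc; unfold N; ud; ring. }
  assert (E2 : dot y c * (N*N) = dot n y * dot n c * N).
  { transitivity (sum3 (fun i => (y i * N) * (c i * N))); [ud; ring|].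
    unfold sum3; rewrite !Hy, !Hcc; unfold N; ud; ring. }
  rewrite yc in E2.
  assert (Hnc : dot n c <> 0).
  { intro Z; rewrite Z in E1. assert (0 < dot c c * (N*N)) by (apply Rmult_lt_0_compat; nra); lra. }
  assert (Hny : dot n y = 0).
  { assert (Q : dot n y * dot n c * N = 0) by lra.
    apply Rmult_integral in Q; destruct Q as [Q|Q]; [apply Rmult_integral in Q|]; intuition lra. }
  intro i. specialize (Hy i). rewrite Hny in Hy. nra.
Qed.

Lemma completeness3 a b c x : nz a -> nz b -> nz c -> dot a b = 0 -> dot a c = 0 -> dot b c = 0 ->
  forall i, x i = dot a x / dot a a * a i + dot b x / dot b b * b i + dot c x / dot c c * c i.
Proof.
  intros Ha Hb Hc ab ac bc.
  set (y := fun i => x i - (dot a x / dot a a * a i + dot b x / dot b b * b i + dot c x / dot c c * c i)).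
  unfold nz in *.
  assert (dot a a <> 0) by lra. assert (dot b b <> 0) by lra. assert (dot c c <> 0) by lra.
  assert (ba : dot b a = 0) by (rewrite dot_sym; auto).
  assert (ca : dot c a = 0) by (rewrite dot_sym; auto).
  assert (cb : dot c b = 0) by (rewrite dot_sym; auto).
  assert (Z := orth_zero a b c y Ha Hb Hc ab ac bc).
  intro i. assert (y i = 0).
  { apply Z.
    - transitivity (dot x a - dot a x / dot a a * dot a a - dot b x / dot b b * dot b a - dot c x / dot c c * dot c a);
       [unfold y; ud; ring|]. rewrite ba, ca, dot_sym. field; auto.
    - transitivity (dot x b - dot a x / dot a a * dot a b - dot b x / dot b b * dot b b - dot c x / dot c c * dot c b);
       [unfold y; ud; ring|]. rewrite ab, cb, (dot_sym x b). field; auto.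
    - transitivity (dot x c - dot a x / dot a a * dot a c - dot b x / dot b b * dot b c - dot c x / dot c c * dot c c);
       [unfold y; ud; ring|]. rewrite ac, bc, (dot_sym x c). field; auto. }
  unfold y in H2; lra.
Qed.


Definition zvec (A:tensor) (u b : vec3) : vec3 := fun k => sum3 (fun i => sum3 (fun j => u i * b j * A i j k)).
Definition term (A:tensor) (u b : vec3) : tensor := outer (vsc (/dot u u) u) (vsc (/dot b b) b) (zvec A u b).
Fixpoint pw (l : list tensor) : Prop := match l with [] => True | Y :: l' => Forall (fun Z => frob_inner Y Z = 0) l' /\ pw l' end.
Definition tsum (l : list tensor) := fold_right tadd tzero l.
Definition is_outer (T:tensor) := exists x y z, T = outer x y z.

Lemma frob_outer x y z x' y' z' : frob_inner (outer x y z) (outer x' y' z') = dot x x' * dot y y' * dot z z'.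
Proof. unfold frob_inner, outer; ud; ring. Qed.
Lemma dot_vsc a u a' u' : dot (vsc a u) (vsc a' u') = a * a' * dot u u'.
Proof. ud; ring. Qed.
Lemma term_orth_u A u b u' b' : dot u u' = 0 -> frob_inner (term A u b) (term A u' b') = 0.
Proof. intros H; unfold term; rewrite frob_outer, dot_vsc, H; ring. Qed.
Lemma term_orth_b A u b b' : dot b b' = 0 -> frob_inner (term A u b) (term A u b') = 0.
Proof. intros H; unfold term; rewrite frob_outer, (dot_vsc _ b), H; ring. Qed.

Lemma decomp7 (A : tensor) : exists Ys, length Ys = 7%nat /\ Forall is_outer Ys /\ pw Ys /\ tsum Ys = A.
Proof.
  destruct (root2 (slice A (mk3 1 0 0)) (slice A (mk3 0 1 0))) as [s [t [Hst D1]]].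
  set (u1 := mk3 s t 0).
  assert (Hs1 : slice A u1 = fun j k => s * slice A (mk3 1 0 0) j k + t * slice A (mk3 0 1 0) j k).
  { apply functional_extensionality; intro j; apply functional_extensionality; intro k. unfold u1; ud; ring. }
  rewrite <- Hs1 in D1.
  assert (n1 : nz u1) by (unfold nz, u1; ud; destruct Hst; nra).
  destruct (complete2 u1 n1) as [w1 [w2 [nw1 [nw2 [o1 [o2 ow]]]]]].
  destruct (root2 (slice A w1) (slice A w2)) as [s' [t' [Hst' D2]]].
  set (u2 := vlin s' w1 t' w2).
  assert (Hs2 : slice A u2 = fun j k => s' * slice A w1 j k + t' * slice A w2 j k).
  { apply functional_extensionality; intro j; apply functional_extensionality; intro k. unfold u2; ud; ring. }
  rewrite <- Hs2 in D2.
  assert (n2 : nz u2).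
  { unfold nz in *. replace (dot u2 u2) with (s'^2 * dot w1 w1 + t'^2 * dot w2 w2 + 2*s'*t'*dot w1 w2)
      by (unfold u2; ud; ring). rewrite ow. assert (0 <= s'*s') by nra; assert (0 <= t'*t') by nra.
    destruct Hst' as [h|h]; [pose proof (Rsqr_pos_lt _ h) | pose proof (Rsqr_pos_lt _ h)]; unfold Rsqr in *; nra. }
  assert (o12 : dot u1 u2 = 0).
  { replace (dot u1 u2) with (s' * dot u1 w1 + t' * dot u1 w2) by (unfold u2; ud; ring). rewrite o1, o2; ring. }
  set (u3 := cross u1 u2).
  assert (n3 : nz u3).
  { unfold nz in *. replace (dot u3 u3) with (dot u1 u1 * dot u2 u2 - dot u1 u2 * dot u1 u2) by (unfold u3; ud; ring).
    rewrite o12; nra. }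
  assert (o13 : dot u1 u3 = 0) by (unfold u3; ud; ring).
  assert (o23 : dot u2 u3 = 0) by (unfold u3; ud; ring).
  unfold det3 in D1, D2.
  destruct (null3 _ _ _ D1) as [v1 [nv1 [z10 [z11 z12]]]].
  destruct (null3 _ _ _ D2) as [v2 [nv2 [z20 [z21 z22]]]].
  destruct (complete2 v1 nv1) as [p1 [q1 [np1 [nq1 [op1 [oq1 opq1]]]]]].
  destruct (complete2 v2 nv2) as [p2 [q2 [np2 [nq2 [op2 [oq2 opq2]]]]]].
  set (e1 := mk3 1 0 0); set (e2 := mk3 0 1 0); set (e3 := mk3 0 0 1).
  assert (ne1 : nz e1) by (unfold nz, e1; ud; lra).
  assert (ne2 : nz e2) by (unfold nz, e2; ud; lra).
  assert (ne3 : nz e3) by (unfold nz, e3; ud; lra).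
  assert (oe12 : dot e1 e2 = 0) by (unfold e1, e2; ud; ring).
  assert (oe13 : dot e1 e3 = 0) by (unfold e1, e3; ud; ring).
  assert (oe23 : dot e2 e3 = 0) by (unfold e2, e3; ud; ring).
  exists [term A u1 p1; term A u1 q1; term A u2 p2; term A u2 q2; term A u3 e1; term A u3 e2; term A u3 e3].
  split; [reflexivity|]. split.
  { repeat (apply Forall_cons; [unfold is_outer, term; do 3 eexists; reflexivity|]); apply Forall_nil. }
  split.
  { simpl pw. repeat (apply Forall_cons || apply Forall_nil || split);
      first [apply term_orth_u; assumption | apply term_orth_b; assumption]. }
  assert (Hl1 : forall j k, dot u1 (fun i => A i j k) = p1 j / dot p1 p1 * zvec A u1 p1 k + q1 j / dot q1 q1 * zvec A u1 q1 k).
  { intros j k. transitivity (slice A u1 j k); [ud; ring|].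
    rewrite (completeness3 p1 q1 v1 (fun j => slice A u1 j k) np1 nq1 nv1 opq1
       ltac:(rewrite dot_sym; exact op1) ltac:(rewrite dot_sym; exact oq1) j).
    assert (Z : dot v1 (fun j => slice A u1 j k) = 0) by (destruct k; assumption).
    rewrite Z. replace (dot p1 (fun j => slice A u1 j k)) with (zvec A u1 p1 k) by (unfold zvec; ud; ring).
    replace (dot q1 (fun j => slice A u1 j k)) with (zvec A u1 q1 k) by (unfold zvec; ud; ring).
    unfold nz in *. field. lra. }
  assert (Hl2 : forall j k, dot u2 (fun i => A i j k) = p2 j / dot p2 p2 * zvec A u2 p2 k + q2 j / dot q2 q2 * zvec A u2 q2 k).
  { intros j k. transitivity (slice A u2 j k); [ud; ring|].
    rewrite (completeness3 p2 q2 v2 (fun j => slice A u2 j k) np2 nq2 nv2 opq2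
       ltac:(rewrite dot_sym; exact op2) ltac:(rewrite dot_sym; exact oq2) j).
    assert (Z : dot v2 (fun j => slice A u2 j k) = 0) by (destruct k; assumption).
    rewrite Z. replace (dot p2 (fun j => slice A u2 j k)) with (zvec A u2 p2 k) by (unfold zvec; ud; ring).
    replace (dot q2 (fun j => slice A u2 j k)) with (zvec A u2 q2 k) by (unfold zvec; ud; ring).
    unfold nz in *. field. lra. }
  assert (Hl3 : forall j k, dot u3 (fun i => A i j k) = e1 j / dot e1 e1 * zvec A u3 e1 k + e2 j / dot e2 e2 * zvec A u3 e2 k
     + e3 j / dot e3 e3 * zvec A u3 e3 k).
  { intros j k. transitivity (slice A u3 j k); [ud; ring|].
    rewrite (completeness3 e1 e2 e3 (fun j => slice A u3 j k) ne1 ne2 ne3 oe12 oe13 oe23 j).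
    replace (dot e1 (fun j => slice A u3 j k)) with (zvec A u3 e1 k) by (unfold zvec, e1; ud; ring).
    replace (dot e2 (fun j => slice A u3 j k)) with (zvec A u3 e2 k) by (unfold zvec, e2; ud; ring).
    replace (dot e3 (fun j => slice A u3 j k)) with (zvec A u3 e3 k) by (unfold zvec, e3; ud; ring).
    unfold nz in *; field; repeat split; lra. }
  apply functional_extensionality; intro i; apply functional_extensionality; intro j;
    apply functional_extensionality; intro k.
  pose proof (completeness3 u1 u2 u3 (fun i => A i j k) n1 n2 n3 o12 o13 o23 i) as E. cbv beta in E.
  rewrite E, Hl1, Hl2, Hl3. clear E.
  unfold tsum, fold_right, tadd, tzero, term, outer, vsc. unfold nz in *.
  field. repeat split; lra.
Qed.

Lemma frob_sym A B : frob_inner A B = frob_inner B A.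
Proof. unfold frob_inner, sum3; ring. Qed.
Lemma frob_addl A B C : frob_inner (tadd A B) C = frob_inner A C + frob_inner B C.
Proof. unfold frob_inner, tadd, sum3; ring. Qed.
Lemma frob_zerol C : frob_inner tzero C = 0.
Proof. unfold frob_inner, tzero, sum3; ring. Qed.

Lemma tadd_zero_l B : tadd tzero B = B.
Proof. apply functional_extensionality; intro i; apply functional_extensionality; intro j;
    apply functional_extensionality; intro k. unfold tadd, tzero; ring. Qed.

Lemma outer_nz_rank_one T : is_outer T -> T <> tzero -> rank_one T.
Proof. intros [x [y [z H]]] Hn; split; eauto. Qed.

Lemma filt : forall l, Forall is_outer l -> pw l -> exists l', (length l' <= length l)%nat /\
  Forall rank_one l' /\ pw l' /\ tsum l' = tsum l /\ incl l' l.
Proof.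
  induction l as [|Y l IH]; intros Ho Hp.
  - exists []; simpl; repeat split; auto; apply incl_refl.
  - inversion Ho; subst. destruct Hp as [HY Hp].
    destruct (IH H2 Hp) as [l' [Hlen [Hr [Hp' [Hs Hi]]]]].
    destruct (classic (Y = tzero)) as [HZ|HZ].
    + exists l'; repeat split; auto.
      * simpl; lia.
      * simpl; rewrite HZ, tadd_zero_l; auto.
      * apply incl_tl; auto.
    + exists (Y :: l'); repeat split.
      * simpl; lia.
      * constructor; auto. apply outer_nz_rank_one; auto.
      * rewrite Forall_forall in *. intros Z HZ'. apply HY. apply Hi; auto.
      * auto.
      * simpl; rewrite Hs; auto.
      * apply incl_cons; [left; auto| apply incl_tl; auto].
Qed.

Lemma pw_nth : forall l, pw l -> forall a b, (a < length l)%nat -> (b < length l)%nat -> a <> b ->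
  frob_inner (nth a l tzero) (nth b l tzero) = 0.
Proof.
  induction l as [|Y l IH]; intros Hp0 a b Ha Hb Hab; simpl in *; [lia|].
  destruct Hp0 as [HY Hp]. rewrite Forall_forall in HY.
  destruct a as [|a]; destruct b as [|b]; try lia.
  - apply HY, nth_In; lia.
  - rewrite frob_sym; apply HY, nth_In; lia.
  - apply IH; auto; lia.
Qed.

Lemma nth_pw : forall l, (forall a b, (a < length l)%nat -> (b < length l)%nat -> a <> b ->
  frob_inner (nth a l tzero) (nth b l tzero) = 0) -> pw l.
Proof.
  induction l as [|Y l IH]; intros H; simpl; auto. split.
  - rewrite Forall_forall; intros Z HZ. destruct (In_nth l Z tzero HZ) as [b [Hb Hn]].
    rewrite <- Hn. apply (H 0%nat (S b)); simpl; lia.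
  - apply IH. intros a b Ha Hb Hab. apply (H (S a) (S b)); simpl; lia.
Qed.

Lemma orth_le7 A : exists r, (r <= 7)%nat /\ orth_decomp A r.
Proof.
  destruct (decomp7 A) as [Ys [Hl [Ho [Hp Hs]]]].
  destruct (filt Ys Ho Hp) as [l' [Hlen [Hr [Hp' [Hs' _]]]]].
  exists (length l'); split; [lia|].
  exists l'; repeat split; auto.
  - intros; apply pw_nth; auto.
  - rewrite <- Hs, <- Hs'; reflexivity.
Qed.


Lemma sum3_zero f : (forall i, 0 <= f i) -> sum3 f = 0 -> forall i, f i = 0.
Proof. unfold sum3; intros H Hs i; pose proof (H I0); pose proof (H I1); pose proof (H I2); destruct i; lra. Qed.
Lemma sum3_nonneg f : (forall i, 0 <= f i) -> 0 <= sum3 f.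
Proof. unfold sum3; intros H; pose proof (H I0); pose proof (H I1); pose proof (H I2); lra. Qed.

Lemma frob_ge0 B : 0 <= frob_inner B B.
Proof. unfold frob_inner. apply sum3_nonneg; intro i; apply sum3_nonneg; intro j; apply sum3_nonneg; intro k; nra. Qed.

Lemma frob_zero B : frob_inner B B = 0 -> B = tzero.
Proof.
  intro H. unfold frob_inner in H.
  apply functional_extensionality; intro i; apply functional_extensionality; intro j;
    apply functional_extensionality; intro k. unfold tzero.
  assert (H1 := sum3_zero _ (fun i => sum3_nonneg _ (fun j => sum3_nonneg _ (fun k => Rle_0_sqr (B i j k)))) H i).
  cbv beta in H1.
  assert (H2 := sum3_zero _ (fun j => sum3_nonneg _ (fun k => Rle_0_sqr (B i j k))) H1 j).
  cbv beta in H2.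
  assert (H3 := sum3_zero _ (fun k => Rle_0_sqr (B i j k)) H2 k).
  unfold Rsqr in H3. nra.
Qed.

Lemma vnorm1_dot x : vnorm x = 1 -> dot x x = 1.
Proof. unfold vnorm; intro H. change (sum3 (fun i => x i * x i)) with (dot x x) in H.
  rewrite <- (sqrt_sqrt (dot x x)) by apply dot_ge0. rewrite H; ring. Qed.

Lemma spec_bound A : bound (spec_values A).
Proof.
  exists ((frob_inner A A + 1)/2). intros v [x [y [z [hx [hy [hz ->]]]]]].
  apply vnorm1_dot in hx, hy, hz.
  set (Y := outer x y z).
  pose proof (frob_ge0 (fun i j k => A i j k - Y i j k)) as H.
  replace (frob_inner (fun i j k => A i j k - Y i j k) (fun i j k => A i j k - Y i j k))
    with (frob_inner A A - 2 * frob_inner A Y + frob_inner Y Y) in H by (unfold frob_inner, sum3; ring).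
  unfold Y in H; rewrite frob_outer, hx, hy, hz in H. unfold Y; lra.
Qed.

Lemma vnorm_e1 : vnorm (mk3 1 0 0) = 1.
Proof. unfold vnorm. replace (sum3 (fun i => mk3 1 0 0 i * mk3 1 0 0 i)) with 1 by (unfold sum3, mk3; ring). apply sqrt_1. Qed.
Lemma vnorm_me1 : vnorm (mk3 (-1) 0 0) = 1.
Proof. unfold vnorm. replace (sum3 (fun i => mk3 (-1) 0 0 i * mk3 (-1) 0 0 i)) with 1 by (unfold sum3, mk3; ring). apply sqrt_1. Qed.

Lemma spec_lub A : is_lub (spec_values A) (spec_norm A).
Proof.
  unfold spec_norm. apply epsilon_spec.
  destruct (completeness _ (spec_bound A)) as [m Hm].
  - exists (frob_inner A (outer (mk3 1 0 0) (mk3 1 0 0) (mk3 1 0 0))).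
    exists (mk3 1 0 0), (mk3 1 0 0), (mk3 1 0 0); repeat split; auto; apply vnorm_e1.
  - exists m; auto.
Qed.

Lemma spec_ge A x y z : vnorm x = 1 -> vnorm y = 1 -> vnorm z = 1 -> frob_inner A (outer x y z) <= spec_norm A.
Proof. intros. apply (proj1 (spec_lub A)). exists x, y, z; auto. Qed.

Lemma spec_nonneg A : 0 <= spec_norm A.
Proof.
  pose proof (spec_ge A _ _ _ vnorm_e1 vnorm_e1 vnorm_e1).
  pose proof (spec_ge A _ _ _ vnorm_me1 vnorm_e1 vnorm_e1).
  replace (frob_inner A (outer (mk3 (-1) 0 0) (mk3 1 0 0) (mk3 1 0 0))) with
    (- frob_inner A (outer (mk3 1 0 0) (mk3 1 0 0) (mk3 1 0 0))) in H0 by (unfold frob_inner, outer, sum3, mk3; ring).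
  lra.
Qed.

Lemma outer_nz x y z : outer x y z <> tzero -> nz x /\ nz y /\ nz z.
Proof.
  intros H. unfold nz.
  destruct (Rlt_dec 0 (dot x x)) as [hx|hx];
  [destruct (Rlt_dec 0 (dot y y)) as [hy|hy];
   [destruct (Rlt_dec 0 (dot z z)) as [hz|hz]|]|]; auto; exfalso; apply H;
  apply functional_extensionality; intro i; apply functional_extensionality; intro j;
    apply functional_extensionality; intro k; unfold outer, tzero.
  - pose proof (dot_ge0 z). rewrite (dot_zero z ltac:(lra) k); ring.
  - pose proof (dot_ge0 y). rewrite (dot_zero y ltac:(lra) j); ring.
  - pose proof (dot_ge0 x). rewrite (dot_zero x ltac:(lra) i); ring.
Qed.

Lemma normalize x : nz x -> 0 < vnorm x /\ vnorm x * vnorm x = dot x x /\ vnorm (vsc (/ vnorm x) x) = 1.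
Proof.
  unfold nz; intros H. unfold vnorm. change (sum3 (fun i => x i * x i)) with (dot x x).
  assert (h1 : 0 < sqrt (dot x x)) by (apply sqrt_lt_R0; auto).
  assert (h2 : sqrt (dot x x) * sqrt (dot x x) = dot x x) by (apply sqrt_sqrt; lra).
  split; auto; split; auto.
  change (sum3 (fun i => vsc (/ sqrt (dot x x)) x i * vsc (/ sqrt (dot x x)) x i)) with
     (dot (vsc (/ sqrt (dot x x)) x) (vsc (/ sqrt (dot x x)) x)).
  rewrite dot_vsc. set (s := sqrt (dot x x)) in *.
  replace (/ s * / s * dot x x) with 1. apply sqrt_1.
  rewrite <- h2. field. lra.
Qed.

Lemma rank_one_bound A x y z : outer x y z <> tzero ->
  frob_inner A (outer x y z) = frob_inner (outer x y z) (outer x y z) ->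
  frob_inner (outer x y z) (outer x y z) <= spec_norm A ^ 2.
Proof.
  intros Hn HA. destruct (outer_nz _ _ _ Hn) as [nx [ny nz']].
  destruct (normalize x nx) as [px [sx ux]].
  destruct (normalize y ny) as [py [sy uy]].
  destruct (normalize z nz') as [pz [sz uz]].
  pose proof (spec_ge A _ _ _ ux uy uz) as Hs.
  set (q := vnorm x * vnorm y * vnorm z).
  assert (E1 : frob_inner A (outer x y z) = q * frob_inner A (outer (vsc (/ vnorm x) x) (vsc (/ vnorm y) y) (vsc (/ vnorm z) z))).
  { unfold q, frob_inner, outer, vsc, sum3. field. lra. }
  assert (E2 : frob_inner (outer x y z) (outer x y z) = q * q).
  { rewrite frob_outer, <- sx, <- sy, <- sz; unfold q; ring. }
  assert (hq : 0 < q) by (unfold q; apply Rmult_lt_0_compat; [apply Rmult_lt_0_compat|]; auto).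
  rewrite E2 in *. rewrite E1 in HA.
  pose proof (spec_nonneg A).
  assert (q <= spec_norm A) by nra. nra.
Qed.

Lemma tsum_orth Z l : Forall (fun W => frob_inner Z W = 0) l -> frob_inner (tsum l) Z = 0.
Proof.
  induction l as [|W l IH]; intros H; simpl.
  - apply frob_zerol.
  - inversion H; subst. rewrite frob_addl, IH, frob_sym; auto. lra.
Qed.

Lemma tsum_in l : pw l -> forall Y, In Y l -> frob_inner (tsum l) Y = frob_inner Y Y.
Proof.
  induction l as [|Z l IH]; intros Hp Y HY; simpl in *; [contradiction|].
  destruct Hp as [HZ Hp]. rewrite frob_addl. destruct HY as [<-|HY].
  - rewrite tsum_orth; auto; ring.
  - rewrite IH; auto. rewrite Forall_forall in HZ. rewrite HZ; auto; ring.
Qed.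

Lemma tsum_norm l S : pw l -> (forall Y, In Y l -> frob_inner Y Y <= S) ->
  frob_inner (tsum l) (tsum l) <= INR (length l) * S.
Proof.
  induction l as [|Z l IH]; intros Hp H; simpl in *.
  - rewrite frob_zerol; lra.
  - destruct Hp as [HZ Hp]. change (fold_right tadd tzero l) with (tsum l).
    replace (frob_inner (tadd Z (tsum l)) (tadd Z (tsum l))) with
      (frob_inner Z Z + 2 * frob_inner (tsum l) Z + frob_inner (tsum l) (tsum l))
      by (unfold frob_inner, tadd, sum3; ring).
    rewrite tsum_orth by auto.
    assert (frob_inner (tsum l) (tsum l) <= INR (length l) * S) by (apply IH; auto).
    pose proof (H Z (or_introl eq_refl)).
    destruct (length l); [simpl in *; lra| rewrite S_INR in *; lra].
Qed.

Lemma orth_bound A r : orth_decomp A r -> frob_inner A A <= INR r * spec_norm A ^ 2.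
Proof.
  intros [Ys [Hl [Hr [Ho HA]]]].
  assert (Hp : pw Ys) by (apply nth_pw; rewrite Hl; auto).
  change (fold_right tadd tzero Ys) with (tsum Ys) in HA.
  rewrite <- Hl. rewrite HA at 1 2. apply tsum_norm; auto.
  intros Y HY. rewrite Forall_forall in Hr. destruct (Hr Y HY) as [Hn [x [y [z ->]]]].
  apply rank_one_bound; auto. rewrite HA. apply tsum_in; auto.
Qed.


Definition Ch : tensor := fun i j k => match i, j, k with
 | I0,I0,I0 => 1
 | I0,I1,I1 | I1,I0,I1 | I1,I1,I0 => -1
 | I0,I2,I2 | I2,I0,I2 | I2,I2,I0 => -1
 | _,_,_ => 0 end.

Lemma Ch_sym : symmetric Ch.
Proof. intros i j k; destruct i, j, k; simpl; repeat split; reflexivity. Qed.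

Lemma Ch_assoc : assoc_sym_tensor cheb33 Ch.
Proof. split; [apply Ch_sym|]. intro x. unfold cheb33, frob_inner, outer, sum3, Ch; ring. Qed.

Lemma Ch_unique A : assoc_sym_tensor cheb33 A -> A = Ch.
Proof.
  intros [HS HP].
  destruct (HS I0 I0 I0) as [? [? ?]].
  destruct (HS I0 I0 I1) as [? [? ?]].
  destruct (HS I0 I0 I2) as [? [? ?]].
  destruct (HS I0 I1 I0) as [? [? ?]].
  destruct (HS I0 I1 I1) as [? [? ?]].
  destruct (HS I0 I1 I2) as [? [? ?]].
  destruct (HS I0 I2 I0) as [? [? ?]].
  destruct (HS I0 I2 I1) as [? [? ?]].
  destruct (HS I0 I2 I2) as [? [? ?]].
  destruct (HS I1 I0 I0) as [? [? ?]].
  destruct (HS I1 I0 I1) as [? [? ?]].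
  destruct (HS I1 I0 I2) as [? [? ?]].
  destruct (HS I1 I1 I0) as [? [? ?]].
  destruct (HS I1 I1 I1) as [? [? ?]].
  destruct (HS I1 I1 I2) as [? [? ?]].
  destruct (HS I1 I2 I0) as [? [? ?]].
  destruct (HS I1 I2 I1) as [? [? ?]].
  destruct (HS I1 I2 I2) as [? [? ?]].
  destruct (HS I2 I0 I0) as [? [? ?]].
  destruct (HS I2 I0 I1) as [? [? ?]].
  destruct (HS I2 I0 I2) as [? [? ?]].
  destruct (HS I2 I1 I0) as [? [? ?]].
  destruct (HS I2 I1 I1) as [? [? ?]].
  destruct (HS I2 I1 I2) as [? [? ?]].
  destruct (HS I2 I2 I0) as [? [? ?]].
  destruct (HS I2 I2 I1) as [? [? ?]].
  destruct (HS I2 I2 I2) as [? [? ?]].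
  pose proof (HP (mk3 (1) (0) (0))).
  pose proof (HP (mk3 (0) (1) (0))).
  pose proof (HP (mk3 (0) (0) (1))).
  pose proof (HP (mk3 (1) (1) (0))).
  pose proof (HP (mk3 (1) (-1) (0))).
  pose proof (HP (mk3 (1) (0) (1))).
  pose proof (HP (mk3 (1) (0) (-1))).
  pose proof (HP (mk3 (0) (1) (1))).
  pose proof (HP (mk3 (0) (1) (-1))).
  pose proof (HP (mk3 (1) (1) (1))).
  unfold cheb33, frob_inner, outer, sum3, mk3 in *.
  apply functional_extensionality; intro i; apply functional_extensionality; intro j;
    apply functional_extensionality; intro k.
  destruct i, j, k; simpl; lra.
Qed.

Lemma Ch_frob : frob_inner Ch Ch = 7.
Proof. unfold frob_inner, sum3, Ch; ring. Qed.

Lemma Ch_spec : spec_norm Ch = 1.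
Proof.
  apply (is_lub_u (spec_values Ch)); [apply spec_lub|]. split.
  - intros w [x [y [z [hx [hy [hz ->]]]]]].
    apply vnorm1_dot in hx, hy, hz.
    set (v := mk3 (y I0 * z I0 - y I1 * z I1 - y I2 * z I2) (-(y I0 * z I1 + y I1 * z I0)) (-(y I0 * z I2 + y I2 * z I0))).
    replace (frob_inner Ch (outer x y z)) with (dot x v) by (unfold v, frob_inner, outer, sum3, Ch; ud; ring).
    assert (E : dot v v + (y I1 * z I2 - y I2 * z I1)^2 = dot y y * dot z z) by (unfold v; ud; ring).
    rewrite hy, hz in E.
    pose proof (dot_ge0 (fun i => x i - v i)) as H.
    replace (dot (fun i => x i - v i) (fun i => x i - v i)) with (dot x x - 2 * dot x v + dot v v) in H by (ud; ring).
    pose proof (pow2_ge_0 (y I1 * z I2 - y I2 * z I1)). lra.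
  - intros b Hb. apply Hb. exists (mk3 1 0 0), (mk3 1 0 0), (mk3 1 0 0); repeat split; try apply vnorm_e1.
    unfold frob_inner, outer, sum3, Ch, mk3; ring.
Qed.

Lemma Ch_nz : Ch <> tzero.
Proof. intro H. assert (Ch I0 I0 I0 = tzero I0 I0 I0) by (rewrite H; auto). unfold Ch, tzero in H0; lra. Qed.

Lemma Ch_ratio : spec_norm Ch / frob_norm Ch = 1 / sqrt 7.
Proof. unfold frob_norm; rewrite Ch_spec, Ch_frob; reflexivity. Qed.

Lemma least_nat (P : nat -> Prop) : (exists n, P n) -> exists n, P n /\ forall m, P m -> (n <= m)%nat.
Proof.
  intros [n0 Hn0].
  destruct (classic (exists n, P n /\ forall m, P m -> (n <= m)%nat)) as [H|H]; auto.
  exfalso.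
  assert (K : forall n k, (k <= n)%nat -> ~ P k).
  { induction n as [|n IH]; intros k Hk HP; apply H; exists k; split; auto; intros m Hm.
    - lia.
    - destruct (le_lt_dec k m) as [l|l]; auto. exfalso; apply (IH m); auto; lia. }
  apply (K n0 n0); auto.
Qed.

Lemma rk_spec A : orth_decomp A (rk_perp A) /\ forall r', orth_decomp A r' -> (rk_perp A <= r')%nat.
Proof.
  unfold rk_perp. apply epsilon_spec. apply least_nat.
  destruct (orth_le7 A) as [r [_ H]]; eauto.
Qed.

Lemma rk_le7 A : (rk_perp A <= 7)%nat.
Proof. destruct (orth_le7 A) as [r [Hr H]]. pose proof (proj2 (rk_spec A) r H). lia. Qed.

Lemma rk_Ch : rk_perp Ch = 7%nat.
Proof.
  pose proof (rk_le7 Ch). pose proof (orth_bound _ _ (proj1 (rk_spec Ch))) as H1.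
  rewrite Ch_frob, Ch_spec in H1.
  destruct (le_lt_dec 7 (rk_perp Ch)) as [l|l]; [lia|].
  exfalso. assert (h : (rk_perp Ch <= 6)%nat) by lia. apply le_INR in h.
  simpl (INR 6) in h. lra.
Qed.

Lemma max_rk : max_rk_perp = 7%nat.
Proof.
  assert (Hs : (exists A, rk_perp A = max_rk_perp) /\ forall A, (rk_perp A <= max_rk_perp)%nat).
  { unfold max_rk_perp. apply epsilon_spec. exists 7%nat. split; [exists Ch; apply rk_Ch| apply rk_le7]. }
  destruct Hs as [[A HA] HB]. pose proof (HB Ch). rewrite rk_Ch in H. pose proof (rk_le7 A). lia.
Qed.

Lemma ratio_lb A : A <> tzero -> 1 / sqrt 7 <= spec_norm A / frob_norm A.
Proof.
  intro Hn. destruct (orth_le7 A) as [r [Hr H]]. pose proof (orth_bound _ _ H) as B.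
  apply le_INR in Hr. simpl (INR 7) in Hr.
  pose proof (spec_nonneg A) as S0. set (S := spec_norm A) in *.
  assert (B7 : frob_inner A A <= 7 * S^2).
  { pose proof (frob_ge0 A). assert (0 <= S^2) by nra. pose proof (pos_INR r). nra. }
  assert (Fp : 0 < frob_inner A A).
  { pose proof (frob_ge0 A). destruct (Req_dec (frob_inner A A) 0) as [Z|Z]; [exfalso; apply Hn; apply frob_zero; auto| lra]. }
  unfold frob_norm. set (F := frob_inner A A) in *.
  assert (sF : 0 < sqrt F) by (apply sqrt_lt_R0; auto).
  assert (s7 : 0 < sqrt 7) by (apply sqrt_lt_R0; lra).
  assert (sqrt F <= sqrt 7 * S).
  { rewrite <- (sqrt_pow2 S) by auto. rewrite <- sqrt_mult by (lra || nra). apply sqrt_le_1_alt; lra. }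
  apply (Rmult_le_reg_r (sqrt F)); auto. apply (Rmult_le_reg_l (sqrt 7)); auto.
  replace (sqrt 7 * (1 / sqrt 7 * sqrt F)) with (sqrt F) by (field; lra).
  replace (sqrt 7 * (S / sqrt F * sqrt F)) with (sqrt 7 * S) by (field; lra). auto.
Qed.

Lemma brao_val V : V Ch -> brao V = 1 / sqrt 7.
Proof.
  intros HV.
  assert (G : is_glb (ratio_values V) (1 / sqrt 7)).
  { split.
    - intros y [A [_ [Hn ->]]]. apply ratio_lb; auto.
    - intros b Hb. apply Hb. exists Ch; split; auto; split; [apply Ch_nz| symmetry; apply Ch_ratio]. }
  assert (G' : is_glb (ratio_values V) (brao V)) by (unfold brao; apply epsilon_spec; eauto).
  destruct G as [G1 G2]; destruct G' as [G1' G2'].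
  apply Rle_antisym; [apply G2; auto | apply G2'; auto].
Qed.

Theorem corollary1p5 :
  brao full_space = brao sym_space /\
  brao sym_space = 1 / sqrt (INR max_rk_perp) /\
  1 / sqrt (INR max_rk_perp) = 1 / sqrt 7 /\
  (exists A : tensor, assoc_sym_tensor cheb33 A) /\
  (forall A : tensor, assoc_sym_tensor cheb33 A ->
     extremal full_space A /\ extremal sym_space A).
Proof.
  assert (Hf : brao full_space = 1 / sqrt 7) by (apply brao_val; exact I).
  assert (Hs : brao sym_space = 1 / sqrt 7) by (apply brao_val; apply Ch_sym).
  assert (Hm : INR max_rk_perp = 7) by (rewrite max_rk; simpl; ring).
  rewrite Hf, Hs, Hm. split; [auto|split;[auto|split;[auto|split]]].
  - exists Ch; apply Ch_assoc.
  - intros A HA. apply Ch_unique in HA. subst A.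
    split; (split; [| split; [apply Ch_nz| rewrite Ch_ratio; auto]]).
    + exact I.
    + apply Ch_sym.
Qed.
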